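(* Fix integers $s,t\geq 2$ and a subset $W=\{w_1<w_2<\cdots<w_k\}$ of $\{s+1,\ldots,st\}$. Let $\Omega_{s,t}(W)$ be the collection of all sets of integers $I=\{i_1<i_2<\cdots<i_k\}$ satisfying $w_\ell-s+\ell\leq i_\ell\leq w_\ell-1$ for all $\ell\in[k]$, and let $\Lambda_{s,t}(W)$ be the set of all $321$-avoiding linear extensions of $K_{s,t}^\alpha$ whose right-to-left minima are precisely the elements of $[st]\setminus W$. For $I\in\Omega_{s,t}(W)$ let $\mu_W(I)=\mu_1\cdots\mu_{st}$ be the permutation of $[st]$ with $\mu_{i_\ell}=w_\ell$ for all $\ell\in[k]$ and with the elements of $[st]\setminus W$ placed in increasing order in the remaining positions. Then $I\mapsto\mu_W(I)$ is a well-defined injection $\Omega_{s,t}(W)\to\Lambda_{s,t}(W)$. If $t=2$, this map is a bijection.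
   Context: $K^\alpha_{s,t}$ is the poset on $[st]$ whose order is generated by the covering relations $i\lessdot i+1$ for $1\le i\le s-1$ and $i\lessdot i+s$ for $1\le i\le st-s$ (the comb $K_{s,t}$ with $\alpha$-labeling $e_{i,j}\mapsto (j-1)s+i$). A linear extension is a permutation of $[st]$ in which $x$ precedes $y$ whenever $x<y$ in the poset. An entry $\pi_i$ is a right-to-left minimum if $\pi_i<\pi_j$ for all $j>i$. *)

(* Defs.v *)
From mathcomp Require Import all_boot.
From Stdlib Require Import Relations.
Set Implicit Arguments. Unset Strict Implicit. Unset Printing Implicit Defensive.

(* Covering relations of K^alpha_{s,t} on [st] = {1,...,st}:
   i <. i+1 for 1 <= i <= s-1, and i <. i+s for 1 <= i <= st-s. *)
Definition comb_cover (s t : nat) (x y : nat) : Prop :=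
  (1 <= x <= s - 1 /\ y = x + 1) \/ (1 <= x <= s * t - s /\ y = x + s).

Definition comb_le (s t : nat) : nat -> nat -> Prop :=
  clos_refl_trans nat (comb_cover s t).

(* A permutation of [st] is a sequence (pi_1 ... pi_st), stored 0-indexed. *)
Definition is_perm_st (s t : nat) (pi : seq nat) : Prop :=
  perm_eq pi (iota 1 (s * t)).

Definition linear_ext (s t : nat) (pi : seq nat) : Prop :=
  is_perm_st s t pi /\
  forall x y, comb_le s t x y -> x <> y -> index x pi < index y pi.

Definition avoids321 (pi : seq nat) : Prop :=
  ~ exists i j k, [/\ i < j, j < k, k < size pi,
      nth 0 pi j < nth 0 pi i & nth 0 pi k < nth 0 pi j].

Definition rl_min (pi : seq nat) (x : nat) : Prop :=
  exists i, [/\ i < size pi, nth 0 pi i = x &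
    forall j, i < j -> j < size pi -> x < nth 0 pi j].

Definition Lambda (s t : nat) (w : seq nat) (pi : seq nat) : Prop :=
  [/\ linear_ext s t pi, avoids321 pi &
      forall x, rl_min pi x <-> (1 <= x <= s * t /\ x \notin w)].

(* Omega_{s,t}(W): sets I = {i_1 < ... < i_k} (as strictly increasing seqs)
   with w_l - s + l <= i_l <= w_l - 1 (l is 1-indexed; here l.+1). *)
Definition Omega (s t : nat) (w : seq nat) (I : seq nat) : Prop :=
  [/\ sorted ltn I, size I = size w &
      forall l, l < size w ->
        nth 0 w l - s + l.+1 <= nth 0 I l <= nth 0 w l - 1].

Definition mu (s t : nat) (w : seq nat) (I : seq nat) : seq nat :=
  let c := [seq x <- iota 1 (s * t) | x \notin w] in
  [seq (if p \in I then nth 0 w (index p I)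
        else nth 0 c (count (fun q => q \notin I) (iota 1 p.-1)))
   | p <- iota 1 (s * t)].

(* Main.v *)
Require Import Defs.
From mathcomp Require Import all_boot zify.
From Stdlib Require Import Relations.
Set Implicit Arguments. Unset Strict Implicit. Unset Printing Implicit Defensive.

Lemma sltn_uniq (s : seq nat) : sorted ltn s -> uniq s.
Proof. by apply: sorted_uniq; [exact: ltn_trans | exact: ltnn]. Qed.

Lemma sltn_nth (s : seq nat) i j : sorted ltn s -> i < j -> j < size s ->
  nth 0 s i < nth 0 s j.
Proof.
move=> ss ij js; apply: (sorted_ltn_nth ltn_trans) => //; rewrite inE //.
exact: ltn_trans ij js.
Qed.

Lemma sltn_nth_le (s : seq nat) i j : sorted ltn s -> i <= j -> j < size s ->
  nth 0 s i <= nth 0 s j.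
Proof.
move=> ss; rewrite leq_eqVlt => /orP [/eqP -> // | ij] js.
by apply: ltnW; apply: sltn_nth.
Qed.

Lemma sltn_nth_rev (s : seq nat) i j : sorted ltn s -> i < size s -> j < size s ->
  nth 0 s i < nth 0 s j -> i < j.
Proof.
move=> ss iS js h; rewrite ltnNge; apply/negP => ji.
by have := sltn_nth_le ss ji iS; rewrite leqNgt h.
Qed.

Lemma sltn_index (s : seq nat) x y : sorted ltn s -> x \in s -> y \in s ->
  x < y -> index x s < index y s.
Proof.
move=> ss xs ys xy; apply: (sltn_nth_rev ss); rewrite ?index_mem //.
by rewrite !nth_index.
Qed.

Lemma sltn_ge (s : seq nat) m j : sorted ltn s -> all (fun y => m <= y) s ->
  j < size s -> m + j <= nth 0 s j.
Proof.
elim: s m j => [//|a s IH] m [|j] /= ss /andP [ma als] js; first by rewrite addn0.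
have ss' := path_sorted ss.
have := IH m.+1 j ss' _ js; rewrite addnS addSn; apply.
apply/allP => y ys; have := order_path_min ltn_trans ss.
by move=> /allP /(_ y ys) ay; apply: leq_trans ay.
Qed.

Lemma count_lt_nth (s : seq nat) j : sorted ltn s -> j < size s ->
  count (fun y => y < nth 0 s j) s = j.
Proof.
elim: s j => [//|a s IH] [|j] /= ss js.
- rewrite ltnn add0n; apply/eqP; rewrite -leqn0 leqNgt -has_count; apply/hasP.
  move=> [y ys ya]; have := order_path_min ltn_trans ss.
  by move=> /allP /(_ y ys); rewrite ltnNge (ltnW ya).
- have aj : a < nth 0 s j.
    by have := @sltn_nth (a :: s) 0 j.+1 ss (ltn0Sn _) js.
  by rewrite aj IH ?(path_sorted ss).
Qed.

Lemma nth_lt_count (s : seq nat) j x : sorted ltn s ->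
  j < count (fun y => y < x) s -> nth 0 s j < x.
Proof.
elim: s j => [//|a s IH] j /= ss.
case: (ltnP a x) => ax.
- case: j => [//|j] /=; rewrite add1n ltnS; apply: IH; exact: path_sorted ss.
- have -> : count (fun y => y < x) s = 0.
    apply/eqP; rewrite -leqn0 leqNgt -has_count; apply/hasP => -[y ys yx].
    have := order_path_min ltn_trans ss => /allP /(_ y ys) ay.
    by have := leq_ltn_trans ax (ltn_trans ay yx); rewrite ltnn.
  by rewrite add0n.
Qed.

Lemma count_mem_iota (u : seq nat) a b : uniq u ->
  count (mem u) (iota a b) = count (fun y => a <= y < a + b) u.
Proof.
move=> uu; rewrite -!size_filter; apply: perm_size; apply: uniq_perm.
- by apply: filter_uniq; exact: iota_uniq.
- exact: filter_uniq.
move=> y; rewrite !mem_filter mem_iota /=; by rewrite andbC.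
Qed.

Definition cc s t (w : seq nat) := [seq x <- iota 1 (s * t) | x \notin w].
Definition rr (I : seq nat) q := count (fun x => x \notin I) (iota 1 q).
Definition setting s t w I :=
  [/\ 2 <= s, sorted ltn w, all (fun x => s + 1 <= x <= s * t) w & Omega s t w I].

Lemma w_range s t w I : setting s t w I -> forall x, x \in w -> s + 1 <= x <= s * t.
Proof. by case=> _ _ /allP h _. Qed.

Lemma I_bounds s t w I : setting s t w I -> forall l, l < size w ->
  nth 0 w l - s + l.+1 <= nth 0 I l <= nth 0 w l - 1.
Proof. by case=> _ _ _ [_ _ h]. Qed.

Lemma I_range s t w I : setting s t w I -> forall p, p \in I -> 1 <= p < s * t.
Proof.
move=> H p pI; have [_ _ _ [_ sz _]] := H.
have li : index p I < size w by rewrite -sz index_mem.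
have := I_bounds H li; rewrite nth_index //.
have := w_range H (mem_nth 0 li); move: (nth 0 w _) (s * t) => a n; lia.
Qed.

Lemma I_sorted s t w I : setting s t w I -> sorted ltn I.
Proof. by case=> _ _ _ []. Qed.

Lemma size_I s t w I : setting s t w I -> size I = size w.
Proof. by case=> _ _ _ []. Qed.

Lemma cc_sorted s t w : sorted ltn (cc s t w).
Proof. apply: sorted_filter; [exact: ltn_trans| exact: iota_ltn_sorted]. Qed.

Lemma mem_cc s t w x : (x \in cc s t w) = [&& 1 <= x, x <= s * t & x \notin w].
Proof. rewrite mem_filter mem_iota; case: (x \in w) => /=; lia. Qed.

Lemma count_w_all s t w I : setting s t w I ->
  count (mem w) (iota 1 (s * t)) = size w.
Proof.
move=> H; have [_ sw _ _] := H.
rewrite count_mem_iota ?sltn_uniq //; apply/eqP; rewrite -all_count.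
apply/allP => x /(w_range H); lia.
Qed.

Lemma size_cc s t w I : setting s t w I -> size (cc s t w) = s * t - size w.
Proof.
move=> H; rewrite size_filter -(count_w_all H).
have := count_predC (mem w) (iota 1 (s * t)); rewrite size_iota.
have -> : count (predC (mem w)) (iota 1 (s * t)) = count (fun x => x \notin w) (iota 1 (s * t)) by [].
lia.
Qed.

Lemma count_I_iota s t w I q : setting s t w I ->
  count (mem I) (iota 1 q) = count (fun y => y <= q) I.
Proof.
move=> H; rewrite count_mem_iota ?sltn_uniq ?(I_sorted H) //.
apply: eq_in_count => y /(I_range H); lia.
Qed.

Lemma rr_eq s t w I q : setting s t w I -> rr I q = q - count (fun y => y <= q) I.
Proof.
move=> H; rewrite -(count_I_iota _ H) /rr.
have := count_predC (mem I) (iota 1 q); rewrite size_iota.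
have -> : count (predC (mem I)) (iota 1 q) = count (fun x => x \notin I) (iota 1 q) by [].
lia.
Qed.

Lemma rr_split (I : seq nat) a b : a <= b ->
  rr I b = rr I a + count (fun x => x \notin I) (iota a.+1 (b - a)).
Proof.
move=> ab; rewrite /rr -{1}(subnKC ab) iotaD count_cat add1n //.
Qed.

Lemma rr_le (I : seq nat) a b : a <= b -> rr I a <= rr I b.
Proof. by move=> ab; rewrite (rr_split I ab) leq_addr. Qed.

Lemma rr_lt (I : seq nat) a b : a < b -> a.+1 \notin I -> rr I a < rr I b.
Proof.
move=> ab aI; rewrite (rr_split I (ltnW ab)).
have -> : b - a = (b - a).-1.+1 by lia.
by rewrite /= aI add1n addnS ltnS leq_addr.
Qed.

Lemma rr_bound s t w I q : setting s t w I -> q < s * t -> q.+1 \notin I ->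
  rr I q < s * t - size w.
Proof.
move=> H qn qI; have h := rr_lt qn qI; rewrite (rr_eq (s * t) H) in h.
have e : count (fun y => y <= s * t) I = size w.
  rewrite -(size_I H); apply/eqP; rewrite -all_count; apply/allP => y /(I_range H); lia.
by rewrite e in h.
Qed.

Lemma count_le_nthI s t w I l : setting s t w I -> l < size w ->
  count (fun y => y <= (nth 0 I l).-1) I = l.
Proof.
move=> H lk; have lk' : l < size I by rewrite (size_I H).
have := I_range H (mem_nth 0 lk') => r1.
rewrite -[RHS](count_lt_nth (I_sorted H) lk'); apply: eq_count => y /=; move: r1; move: (nth 0 I l) (s * t) => a n; lia.
Qed.

Lemma count_cc_w s t w I x : setting s t w I -> 1 <= x <= (s * t).+1 ->
  count (fun y => y < x) (cc s t w) + count (fun y => y < x) w = x.-1.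
Proof.
move=> H xr; have [_ sw _ _] := H.
have -> : count (fun y => y < x) w = count (mem w) (iota 1 x.-1).
  rewrite count_mem_iota ?sltn_uniq //; apply: eq_in_count => y /(w_range H); lia.
have -> : count (fun y => y < x) (cc s t w) = count (fun y => y \notin w) (iota 1 x.-1).
  rewrite /cc count_filter.
  have -> : s * t = x.-1 + (s * t - x.-1) by lia.
  rewrite iotaD count_cat.
  have -> : count (predI (fun y => y < x) (fun x0 => x0 \notin w)) (iota (1 + x.-1) (s * t - x.-1)) = 0.
    apply/eqP; rewrite -leqn0 leqNgt -has_count; apply/hasP => -[y]; rewrite mem_iota /=; lia.
  rewrite addn0; apply: eq_in_count => y; rewrite mem_iota /=; case: (y \in w) => /=; lia.
have := count_predC (mem w) (iota 1 x.-1); rewrite size_iota.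
have -> : count (predC (mem w)) (iota 1 x.-1) = count (fun x => x \notin w) (iota 1 x.-1) by [].
lia.
Qed.

Lemma size_mu s t w I : size (mu s t w I) = s * t.
Proof. by rewrite /mu size_map size_iota. Qed.

Lemma nth_mu s t w I q : q < s * t -> nth 0 (mu s t w I) q =
  if q.+1 \in I then nth 0 w (index q.+1 I) else nth 0 (cc s t w) (rr I q).
Proof. by move=> qn; rewrite /mu (nth_map 0) ?size_iota // nth_iota. Qed.

Lemma idx_I s t w I p : setting s t w I -> p \in I -> index p I < size w.
Proof. by move=> H pI; rewrite -(size_I H) index_mem. Qed.

Lemma mu_cls s t w I q : setting s t w I -> q < s * t ->
  (nth 0 (mu s t w I) q \in w) = (q.+1 \in I).
Proof.
move=> H qn; rewrite nth_mu //; case: ifP => qI.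
- by rewrite mem_nth // (idx_I H qI).
- have := rr_bound H qn (negbT qI); rewrite -(size_cc H) => rb.
  by have := mem_nth 0 rb; rewrite mem_cc => /and3P [_ _ /negbTE].
Qed.

Lemma mu_range s t w I q : setting s t w I -> q < s * t ->
  1 <= nth 0 (mu s t w I) q <= s * t.
Proof.
move=> H qn; rewrite nth_mu //; case: ifP => qI.
- have := w_range H (mem_nth 0 (idx_I H qI)); move: (nth _ _ _) (s * t) => a n; lia.
- have := rr_bound H qn (negbT qI); rewrite -(size_cc H) => rb.
  by have := mem_nth 0 rb; rewrite mem_cc => /and3P [-> -> _].
Qed.

Lemma mu_same s t w I a b : setting s t w I -> a < b -> b < s * t ->
  (a.+1 \in I) = (b.+1 \in I) -> nth 0 (mu s t w I) a < nth 0 (mu s t w I) b.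
Proof.
move=> H ab bn e; have an := ltn_trans ab bn.
rewrite !nth_mu // -e; case: ifP => aI.
- have bI : b.+1 \in I by rewrite -e.
  have [_ sw _ _] := H.
  apply: sltn_nth => //; last exact: idx_I H bI.
  by apply: sltn_index; rewrite ?(I_sorted H).
- apply: sltn_nth; first exact: cc_sorted.
  + exact: rr_lt ab (negbT aI).
  + by rewrite (size_cc H); apply: rr_bound H bn _; rewrite -e aI.
Qed.

Lemma mu_cross s t w I a b : setting s t w I -> a < b -> b < s * t ->
  a.+1 \notin I -> b.+1 \in I -> nth 0 (mu s t w I) a < nth 0 (mu s t w I) b.
Proof.
move=> H ab bn aI bI; have an := ltn_trans ab bn.
rewrite !nth_mu // (negbTE aI) bI.
have [_ sw _ _] := H.
set l := index b.+1 I.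
have lk : l < size w by exact: idx_I H bI.
have nl : nth 0 I l = b.+1 by rewrite nth_index.
have h1 := rr_lt ab aI.
rewrite (rr_eq b H) in h1.
have := count_le_nthI H lk; rewrite nl /= => cl; rewrite cl in h1.
have bd := I_bounds H lk; rewrite nl in bd.
have wr := w_range H (mem_nth 0 lk).
apply: nth_lt_count; first exact: cc_sorted.
have := count_cc_w H (x := nth 0 w l).
rewrite (count_lt_nth sw lk).
move: (count (fun y => y < nth 0 w l) (cc s t w)) => C; clearbody l.
move: (nth 0 w l) (s * t) (rr I a) wr bd h1 => x n r; lia.
Qed.

Lemma mu_uniq s t w I : setting s t w I -> uniq (mu s t w I).
Proof.
move=> H; apply/(uniqP 0) => a b; rewrite !inE size_mu => an bn e.
apply/eqP; apply: contraT; rewrite neq_ltn => /orP [] ab.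
- case E : (a.+1 \in I == (b.+1 \in I)).
  + by have := mu_same H ab bn (eqP E); rewrite e ltnn.
  + have ca := mu_cls H an; have cb := mu_cls H bn.
    by rewrite -ca -cb e eqxx in E.
- case E : (b.+1 \in I == (a.+1 \in I)).
  + by have := mu_same H ab an (eqP E); rewrite e ltnn.
  + have ca := mu_cls H an; have cb := mu_cls H bn.
    by rewrite -ca -cb e eqxx in E.
Qed.

Lemma mu_perm s t w I : setting s t w I -> is_perm_st s t (mu s t w I).
Proof.
move=> H; rewrite /is_perm_st; apply: uniq_perm; first exact: mu_uniq.
  exact: iota_uniq.
have sub : {subset mu s t w I <= iota 1 (s * t)}.
  move=> x /(nthP 0) [q]; rewrite size_mu => qn <-.
  rewrite mem_iota; have := mu_range H qn; move: (nth _ _ _) (s * t) => y n; lia.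
have sz : size (iota 1 (s * t)) <= size (mu s t w I) by rewrite size_iota size_mu.
by have [_ E] := uniq_min_size (mu_uniq H) sub sz.
Qed.

Lemma mu_pos_w s t w I l : setting s t w I -> l < size w ->
  index (nth 0 w l) (mu s t w I) = (nth 0 I l).-1.
Proof.
move=> H lk; have lk' : l < size I by rewrite (size_I H).
have pI := mem_nth 0 lk'; have := I_range H pI => r1.
have qn : (nth 0 I l).-1 < s * t by move: (nth _ _ _) (s * t) r1 => a n; lia.
have e : (nth 0 I l).-1.+1 = nth 0 I l by move: (nth _ _ _) r1 => a; lia.
have := nth_mu w I qn; rewrite e pI index_uniq ?sltn_uniq ?(I_sorted H) // => <-.
by rewrite index_uniq ?size_mu ?mu_uniq.
Qed.

Lemma mu_val s t w I x : setting s t w I -> 1 <= x <= s * t ->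
  index x (mu s t w I) < s * t /\ nth 0 (mu s t w I) (index x (mu s t w I)) = x.
Proof.
move=> H xr; have xm : x \in mu s t w I.
  by rewrite (perm_mem (mu_perm H)) mem_iota; move: (s * t) xr => n; lia.
by rewrite -{1}(size_mu s t w I) index_mem nth_index.
Qed.

Lemma order_same s t w I x y : setting s t w I -> 1 <= x -> y <= s * t -> x < y ->
  (x \in w) = (y \in w) -> index x (mu s t w I) < index y (mu s t w I).
Proof.
move=> H x1 yn xy e.
have [an ea] := mu_val H (x := x) ltac:(move: (s * t) yn => n; lia).
have [bn eb] := mu_val H (x := y) ltac:(move: (s * t) yn => n; lia).
rewrite ltnNge leq_eqVlt; apply/negP => /orP [/eqP E | ba].
- by move: ea; rewrite -E eb => yx; rewrite yx ltnn in xy.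
- have cl := mu_cls H an; have cl2 := mu_cls H bn.
  have := mu_same H ba an; rewrite -cl -cl2 ea eb e => /(_ erefl).
  by rewrite ltnNge (ltnW xy).
Qed.

Lemma count_w_window s t w I l y : setting s t w I -> l < size w ->
  y = nth 0 w l + s -> count (fun z => z < y) w <= l + s.
Proof.
move=> H lk ->; have [_ sw _ _] := H.
have := count_predUI (fun z => z < nth 0 w l) (fun z => nth 0 w l <= z < nth 0 w l + s) w.
have -> : count (predU (fun z => z < nth 0 w l) (fun z => nth 0 w l <= z < nth 0 w l + s)) w
   = count (fun z => z < nth 0 w l + s) w.
  by apply: eq_count => z /=; lia.
rewrite (count_lt_nth sw lk).
have : count (fun z => nth 0 w l <= z < nth 0 w l + s) w <= s.
  rewrite -count_mem_iota ?sltn_uniq //.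
  by apply: leq_trans (count_size _ _) _; rewrite size_iota.
lia.
Qed.

Lemma cover_ok s t w I x y : 2 <= t -> setting s t w I -> comb_cover s t x y ->
  index x (mu s t w I) < index y (mu s t w I).
Proof.
move=> t2 H cv; have [s2 sw _ _] := H.
have stn : 2 * s <= s * t by rewrite mulnC; exact: leq_mul.
case: cv => [[xr ->] | [xr ->]].
- apply: order_same => //; try lia.
  + have h1 : x \notin w by apply/negP => /(w_range H); lia.
    have h2 : x + 1 \notin w by apply/negP => /(w_range H); lia.
    by rewrite (negbTE h1) (negbTE h2).
- have xn : x + s <= s * t by move: (s * t) xr => n; lia.
  case E : ((x \in w) == (x + s \in w)).
    by apply: order_same => //; [lia|lia|exact: eqP E].
  case xw : (x \in w); rewrite xw in E.
  +
    have ysw : x + s \notin w by case: (x + s \in w) E.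
    set l := index x w; have lk : l < size w by rewrite index_mem.
    have xl : nth 0 w l = x by rewrite nth_index.
    rewrite -xl mu_pos_w // xl.
    have [bn eb] := mu_val H (x := x + s) ltac:(move: (s * t) xn => n; lia).
    set b := index (x + s) (mu s t w I) in bn eb *.
    have lk' : l < size I by rewrite (size_I H).
    have ir := I_range H (mem_nth 0 lk').
    have bd := I_bounds H lk; rewrite xl in bd.
    rewrite ltnNge leq_eqVlt; apply/negP => /orP [/eqP E' | ba].
    * have := mu_cls H bn; rewrite eb (negbTE ysw) => /esym; rewrite E'.
      have -> : (nth 0 I l).-1.+1 = nth 0 I l by move: (nth 0 I l) ir => q; lia.
      by rewrite mem_nth.
    * have an : (nth 0 I l).-1 < s * t by move: (nth 0 I l) (s * t) ir => q n; lia.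
      have bI : b.+1 \notin I by rewrite -(mu_cls H bn) eb.
      have h1 := rr_lt ba bI; rewrite [rr I (nth 0 I l).-1](rr_eq _ H) in h1.
      have := count_le_nthI H lk; rewrite /= => cl; rewrite cl in h1.
      have rb := rr_bound H bn bI; rewrite -(size_cc H) in rb.
      have := nth_mu w I bn; rewrite (negbTE bI) eb => ec.
      have cj := count_lt_nth (cc_sorted s t w) rb; rewrite -ec in cj.
      have := count_cc_w H (x := x + s); rewrite cj.
      have := count_w_window H lk (esym (congr1 (addn^~ s) xl)).
      clearbody l b.
      move: (count _ w) (rr I b) (s * t) (nth 0 I l) ir bd h1 xn => C r n q; lia.
  +
    have ysw : x + s \in w by case: (x + s \in w) E.
    set l := index (x + s) w; have lk : l < size w by rewrite index_mem.
    have xl : nth 0 w l = x + s by rewrite nth_index.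
    rewrite -xl mu_pos_w //.
    have [an ea] := mu_val H (x := x) ltac:(move: (s * t) xn => n; lia).
    set a := index x (mu s t w I) in an ea *.
    have lk' : l < size I by rewrite (size_I H).
    have ir := I_range H (mem_nth 0 lk').
    have bd := I_bounds H lk; rewrite xl in bd.
    rewrite ltnNge leq_eqVlt; apply/negP => /orP [/eqP E' | ba].
    * have := mu_cls H an; rewrite ea xw -E'.
      have -> : (nth 0 I l).-1.+1 = nth 0 I l by move: (nth 0 I l) ir => q; lia.
      by rewrite mem_nth.
    * have aI : a.+1 \notin I by rewrite -(mu_cls H an) ea xw.
      have h1 := rr_le I (ltnW ba); rewrite [rr I (nth 0 I l).-1](rr_eq _ H) in h1.
      have := count_le_nthI H lk; rewrite /= => cl; rewrite cl in h1.
      have rb := rr_bound H an aI; rewrite -(size_cc H) in rb.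
      have := nth_mu w I an; rewrite (negbTE aI) ea => ec.
      have := sltn_ge (m := 1) (cc_sorted s t w) _ rb; rewrite -ec.
      have -> : all (fun y => 1 <= y) (cc s t w).
        by apply/allP => z; rewrite mem_cc => /andP [].
      move=> /(_ erefl); clearbody l a.
      move: (rr I a) (s * t) (nth 0 I l) ir bd h1 xn => r n q; lia.
Qed.

Lemma mu_linext s t w I : 2 <= t -> setting s t w I -> linear_ext s t (mu s t w I).
Proof.
move=> t2 H; split; first exact: mu_perm.
have mono : forall x y, comb_le s t x y -> index x (mu s t w I) <= index y (mu s t w I).
  move=> x y; elim => [a b /(cover_ok t2 H) /ltnW //| a // | a b c _ h1 _ h2].
  exact: leq_trans h1 h2.
move=> x y h ne; destruct (clos_rt_rt1n _ _ _ _ h) as [|z y' cv rt1]; first by [].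
have rt := clos_rt1n_rt _ _ _ _ rt1.
exact: leq_trans (cover_ok t2 H cv) (mono _ _ rt).
Qed.

Lemma mu_rl s t w I x : setting s t w I ->
  rl_min (mu s t w I) x <-> (1 <= x <= s * t /\ x \notin w).
Proof.
move=> H; split.
- move=> [i]; rewrite size_mu => -[iN ei later].
  have xr := mu_range H iN; rewrite ei in xr; split => //.
  apply/negP => xw.
  have iI : i.+1 \in I by rewrite -(mu_cls H iN) ei.
  set l := index i.+1 I; have lk := idx_I H iI.
  have nl : nth 0 I l = i.+1 by rewrite nth_index.
  have ex : nth 0 w l = x by rewrite -ei nth_mu // iI.
  have bd := I_bounds H lk; rewrite nl ex in bd.
  have sub : {subset iota 1 x.-1 <= take i (mu s t w I)}.
    move=> y; rewrite mem_iota => yr.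
    have [jn ej] := mu_val H (x := y) ltac:(move: (s * t) xr yr => n; lia).
    set j := index y (mu s t w I) in jn ej.
    case: (ltngtP j i) => ji.
    + by rewrite -ej -(nth_take 0 ji) mem_nth // size_take size_mu iN.
    + by have := later j ji jn; rewrite ej; move: yr; clearbody j; lia.
    + by move: yr; rewrite -ej ji ei; lia.
  have := uniq_leq_size (iota_uniq 1 x.-1) sub.
  rewrite size_iota size_take size_mu iN; clearbody l; lia.
- move=> [xr xw].
  have [iN ei] := mu_val H xr.
  exists (index x (mu s t w I)); rewrite size_mu; split => // j ij jn.
  have iI : (index x (mu s t w I)).+1 \notin I by rewrite -(mu_cls H iN) ei.
  rewrite -{1}ei; case jI : (j.+1 \in I).
  + exact: mu_cross H ij jn iI jI.
  + by apply: mu_same H ij jn _; rewrite jI (negbTE iI).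
Qed.

Lemma mu_avoid s t w I : setting s t w I -> avoids321 (mu s t w I).
Proof.
move=> H [i [j [k []]]]; rewrite size_mu => ij jk kn h1 h2.
have jn := ltn_trans jk kn; have iN := ltn_trans ij jn.
case E1 : ((i.+1 \in I) == (j.+1 \in I)).
  by have := mu_same H ij jn (eqP E1); rewrite ltnNge (ltnW h1).
case E2 : ((j.+1 \in I) == (k.+1 \in I)).
  by have := mu_same H jk kn (eqP E2); rewrite ltnNge (ltnW h2).
have E3 : (i.+1 \in I) = (k.+1 \in I).
  by move: E1 E2; case: (i.+1 \in I); case: (j.+1 \in I); case: (k.+1 \in I).
have := mu_same H (ltn_trans ij jk) kn E3.
by move: h1 h2; move: (nth 0 _ i) (nth 0 _ j) (nth 0 _ k) => a b c; lia.
Qed.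

Lemma mu_Lambda s t w I : 2 <= t -> setting s t w I -> Lambda s t w (mu s t w I).
Proof.
move=> t2 H; split; [exact: mu_linext | exact: mu_avoid | move=> x; exact: mu_rl].
Qed.

Lemma mu_inj s t w I1 I2 : setting s t w I1 -> setting s t w I2 ->
  mu s t w I1 = mu s t w I2 -> I1 = I2.
Proof.
move=> H1 H2 e; apply: (@eq_from_nth _ 0); first by rewrite (size_I H1) (size_I H2).
move=> l; rewrite (size_I H1) => lk.
have := mu_pos_w H1 lk; rewrite e (mu_pos_w H2 lk).
have l1 : l < size I1 by rewrite (size_I H1).
have l2 : l < size I2 by rewrite (size_I H2).
have := I_range H1 (mem_nth 0 l1).
have := I_range H2 (mem_nth 0 l2).
move: (nth 0 I1 l) (nth 0 I2 l) (s * t) => a b n; lia.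
Qed.

Lemma det (P : pred nat) s1 s2 : map P s1 = map P s2 ->
  filter P s1 = filter P s2 -> filter (predC P) s1 = filter (predC P) s2 -> s1 = s2.
Proof.
elim: s1 s2 => [|a s1 IH] [|b s2] //= [Pab Em].
case Pa : (P a); rewrite -Pab Pa /=.
- by move=> [-> E1] E2; congr cons; apply: IH.
- by move=> E1 [-> E2]; congr cons; apply: IH.
Qed.

Lemma sorted_filter_of (P : pred nat) s :
  (forall i j, i < j -> j < size s -> P (nth 0 s i) -> P (nth 0 s j) ->
     nth 0 s i < nth 0 s j) -> sorted ltn (filter P s).
Proof.
elim: s => [//|a s IH] /= h.
have IH' : sorted ltn (filter P s).
  by apply: IH => i j ij js Pi Pj; apply: (h i.+1 j.+1).
case Pa : (P a) => //=; rewrite path_sortedE; last exact: ltn_trans.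
rewrite IH' andbT; apply/allP => y; rewrite mem_filter => /andP [Py ys].
have := h 0 (index y s).+1 (ltn0Sn _); rewrite /= nth_index // ltnS index_mem ys.
by move=> /(_ erefl Pa Py).
Qed.

Lemma sorted_perm_eq a b : sorted ltn a -> sorted ltn b -> perm_eq a b -> a = b.
Proof.
rewrite !ltn_sorted_uniq_leq => /andP [_ sa] /andP [_ sb].
apply: sorted_eq sa sb; [exact: leq_trans | exact: anti_leq].
Qed.

Lemma not_rl (pi : seq nat) x : uniq pi -> x \in pi -> ~ rl_min pi x ->
  exists j, [/\ index x pi < j, j < size pi & nth 0 pi j < x].
Proof.
move=> upi xpi nr.
case E : (has (fun j => (index x pi < j) && (nth 0 pi j < x)) (iota 0 (size pi))).
- move/hasP: E => [j]; rewrite mem_iota add0n => /andP [_ js] /andP [ij jx].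
  by exists j.
- exfalso; apply: nr; exists (index x pi); split; rewrite ?index_mem ?nth_index //.
  move=> j ij js; rewrite ltnNge leq_eqVlt; apply/negP => /orP [/eqP e | jx].
  + have := index_uniq 0 js upi; rewrite e => ej.
    by rewrite ej ltnn in ij.
  + move/negP: E; apply; apply/hasP; exists j; first by rewrite mem_iota add0n.
    by rewrite ij jx.
Qed.

Lemma pi_mem s t pi x : linear_ext s t pi -> (x \in pi) = (1 <= x <= s * t).
Proof. by case=> /perm_mem h _; rewrite h mem_iota; move: (s * t) => n; lia. Qed.

Lemma pi_uniq s t pi : linear_ext s t pi -> uniq pi.
Proof. by case=> /perm_uniq -> _; exact: iota_uniq. Qed.

Lemma pi_size s t pi : linear_ext s t pi -> size pi = s * t.
Proof. by case=> /perm_size -> _; rewrite size_iota. Qed.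

Lemma rl_pos (pi : seq nat) x : uniq pi -> rl_min pi x ->
  forall j, index x pi < j -> j < size pi -> x < nth 0 pi j.
Proof.
move=> upi [i [iN ei h]] j; rewrite -{1}ei index_uniq //; exact: h.
Qed.

Lemma F1 s t w pi x y : Lambda s t w pi -> 1 <= x -> y <= s * t -> x < y ->
  x \notin w -> y \notin w -> index x pi < index y pi.
Proof.
move=> [lin av rl] x1 yn xy xw yw.
have upi := pi_uniq lin.
have yrl : rl_min pi y by apply/rl; split => //; lia.
have xpi : x \in pi by rewrite (pi_mem _ lin); lia.
have ypi : y \in pi by rewrite (pi_mem _ lin); lia.
rewrite ltnNge leq_eqVlt; apply/negP => /orP [/eqP e | yx].
- have := nth_index 0 xpi; rewrite -e nth_index // => ex.
  by rewrite ex ltnn in xy.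
- have := rl_pos upi yrl yx; rewrite index_mem nth_index // => /(_ xpi).
  by rewrite ltnNge (ltnW xy).
Qed.

Lemma F2 s t w pi x y : Lambda s t w pi -> x \in w -> y \in w -> x < y ->
  all (fun z => 1 <= z <= s * t) w -> index x pi < index y pi.
Proof.
move=> [lin av rl] xw yw xy wr.
have upi := pi_uniq lin.
have xpi : x \in pi by rewrite (pi_mem _ lin); exact: (allP wr).
have ypi : y \in pi by rewrite (pi_mem _ lin); exact: (allP wr).
rewrite ltnNge leq_eqVlt; apply/negP => /orP [/eqP e | yx].
- have := nth_index 0 xpi; rewrite -e nth_index // => ex.
  by rewrite ex ltnn in xy.
- have nrl : ~ rl_min pi x by move=> /rl [_]; rewrite xw.
  have [j [xj jn jx]] := not_rl upi xpi nrl.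
  apply: av; exists (index y pi), (index x pi), j; split => //.
  + by rewrite nth_index // nth_index.
  + by rewrite nth_index.
Qed.

Lemma chain s t v z : 1 <= v -> v <= z -> z <= s -> comb_le s t v z.
Proof.
move=> v1; elim: z => [|z IH] vz zs; first by move: vz v1; lia.
case: (ltngtP v z.+1) vz => // [vz _ | -> _]; last exact: rt_refl.
apply: rt_trans (IH vz (ltnW zs)) _; apply: rt_step; left; split; first lia.
by rewrite addn1.
Qed.

Lemma nth_pi_uniq (pi : seq nat) i j : uniq pi -> i < size pi -> j < size pi ->
  nth 0 pi i = nth 0 pi j -> i = j.
Proof. by move=> /(uniqP 0) h iS jS; apply: h. Qed.

Lemma surj s t w pi : 2 <= s -> t = 2 -> sorted ltn w ->
  all (fun x => s + 1 <= x <= s * t) w -> Lambda s t w pi ->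
  exists I, Omega s t w I /\ mu s t w I = pi.
Proof.
move=> s2 t2 sw wr L; have [lin av rl] := L.
have upi := pi_uniq lin; have szpi := pi_size lin.
have st : s * t = s + s by rewrite t2 mulnC mul2n addnn.
have wr' : all (fun z => 1 <= z <= s * t) w.
  by apply/allP => z /(allP wr); rewrite st; lia.
have wpi : forall x, x \in w -> x \in pi.
  by move=> x /(allP wr'); rewrite (pi_mem _ lin).
set I := [seq (index x pi).+1 | x <- w].
have before : forall x y, x \in w -> y \in pi -> index y pi < index x pi -> y < x.
  move=> x y xw ypi yx.
  case yw : (y \in w).
  - rewrite ltnNge leq_eqVlt; apply/negP => /orP [/eqP e | xy].
      by rewrite e ltnn in yx.
    by have := F2 L xw yw xy wr'; rewrite ltnNge (ltnW yx).
  - have yrl : rl_min pi y by apply/rl; rewrite -(pi_mem _ lin) yw.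
    have xpi := wpi x xw.
    by have := rl_pos upi yrl yx; rewrite index_mem (nth_index 0 xpi); apply.
have Om : Omega s t w I.
  split; [| | move=> l lk].
  - have hm : {in mem w &, {homo (fun x => (index x pi).+1) : x y / x < y >-> x < y}}.
      by move=> x y xw yw xy /=; rewrite ltnS; exact: F2 L xw yw xy wr'.
    exact: (homo_sorted_in hm (allss w) sw).
  - by rewrite size_map.
  - set x := nth 0 w l; have xw : x \in w by exact: mem_nth.
    have xr := allP wr x xw; rewrite /I (nth_map 0) //.
    have xpi := wpi x xw.
    have xn : index x pi < s * t by rewrite -szpi index_mem.
    have nrl : ~ rl_min pi x by move=> /rl [_]; rewrite xw.
    have [j [xj jn jx]] := not_rl upi xpi nrl.
    have up : (index x pi).+1 <= x - 1.
      have U : uniq (nth 0 pi j :: take (index x pi) pi).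
        rewrite /= take_uniq // andbT in_take ?mem_nth // index_uniq //.
        by rewrite -leqNgt ltnW.
      have S : {subset nth 0 pi j :: take (index x pi) pi <= iota 1 x.-1}.
        move=> y; rewrite inE => /orP [/eqP -> | yt].
        + rewrite mem_iota; have := pi_mem (nth 0 pi j) lin; rewrite mem_nth // => /esym.
          by move: jx; move: (nth 0 pi j) => a; lia.
        + have ypi : y \in pi by exact: mem_take yt.
          rewrite in_take // in yt; have := before x y xw ypi yt.
          rewrite mem_iota; rewrite (pi_mem _ lin) in ypi; move: ypi; lia.
      have := uniq_leq_size U S; rewrite size_iota /= size_take szpi xn; lia.
    have lo : x - s + l <= index x pi.
      set V := iota 1 (x - s) ++ take l w.
      have U : uniq V.
        rewrite cat_uniq iota_uniq take_uniq ?sltn_uniq //= andbT.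
        apply/hasP => -[y /mem_take yw]; rewrite mem_iota.
        have := allP wr y yw; move: xr; rewrite st; lia.
      have S : {subset V <= take (index x pi) pi}.
        move=> v; rewrite mem_cat => /orP [vi | vt].
        + rewrite mem_iota in vi.
          have vpi : v \in pi by rewrite (pi_mem _ lin); move: vi xr; rewrite st; lia.
          rewrite in_take //; case: lin => _ h; apply: h.
          * have c1 : comb_le s t v (x - s) by apply: chain; move: vi xr; rewrite st; lia.
            have c2 : comb_le s t (x - s) x.
              apply: rt_step; right; split; first by move: xr; rewrite st; lia.
              by move: xr; lia.
            exact: (rt_trans _ _ _ _ _ c1 c2).
          * move=> e; move: vi xr; rewrite e; lia.
        + have vw : v \in w by exact: mem_take vt.
          have vpi := wpi v vw.
          rewrite in_take //; apply: F2 L vw xw _ wr'.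
          have li := index_mem v (take l w); rewrite vt in li.
          have := nth_index 0 vt; rewrite nth_take; last by rewrite size_take lk in li.
          move=> <-; apply: sltn_nth => //; rewrite size_take lk in li => //.
      have := uniq_leq_size U S; rewrite size_cat size_iota size_take lk size_take szpi xn /=.
      by clearbody x; lia.
    rewrite -/x; clearbody x; move: up lo xr; rewrite st; lia.
exists I; split => //.
have H : setting s t w I by split.
have mupi := mu_perm H; have pipi : perm_eq pi (iota 1 (s * t)) by case: lin.
have smu := size_mu s t w I.
apply: (det (P := fun x => x \in w)).
- apply: (@eq_from_nth _ false); first by rewrite !size_map size_iota szpi.
  move=> q _; case: (ltnP q (s * t)) => qn; last first.
    by rewrite !nth_default // size_map ?szpi ?smu.
  have e1 : nth false [seq x \in w | x <- mu s t w I] q = (nth 0 (mu s t w I) q \in w).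
    by apply: nth_map; rewrite smu.
  have e2 : nth false [seq x \in w | x <- pi] q = (nth 0 pi q \in w).
    by apply: nth_map; rewrite szpi.
  rewrite e1 e2 mu_cls //=.
  apply/idP/idP => [/mapP [x xw [->]] | qw].
  + by rewrite nth_index ?wpi.
  + apply/mapP; exists (nth 0 pi q) => //; rewrite index_uniq ?szpi //.
- apply: sorted_perm_eq.
  + apply: sorted_filter_of => i j ij; rewrite smu => jn /=.
    rewrite !mu_cls ?(ltn_trans ij jn) // => iI jI.
    by apply: mu_same => //; rewrite iI jI.
  + apply: sorted_filter_of => i j ij; rewrite szpi => jn /= iw jw.
    have iN := ltn_trans ij jn.
    rewrite ltnNge leq_eqVlt; apply/negP => /orP [/eqP e | ji].
      by have := nth_pi_uniq upi (i := j) (j := i); rewrite szpi e => /(_ jn iN erefl) E; rewrite E ltnn in ij.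
    have := F2 L jw iw ji wr'; rewrite !index_uniq ?szpi //.
    by rewrite ltnNge (ltnW ij).
  + by apply: perm_trans (perm_filter _ mupi) _; rewrite perm_sym; exact: perm_filter.
- apply: sorted_perm_eq.
  + apply: sorted_filter_of => i j ij; rewrite smu => jn /=.
    rewrite !mu_cls ?(ltn_trans ij jn) // => iI jI.
    by apply: mu_same => //; rewrite (negbTE iI) (negbTE jI).
  + apply: sorted_filter_of => i j ij; rewrite szpi => jn /= iw jw.
    have iN := ltn_trans ij jn.
    have ri := pi_mem (nth 0 pi i) lin; have rj := pi_mem (nth 0 pi j) lin.
    rewrite !mem_nth ?szpi // in ri rj.
    rewrite ltnNge leq_eqVlt; apply/negP => /orP [/eqP e | ji].
      by have := nth_pi_uniq upi (i := j) (j := i); rewrite szpi e => /(_ jn iN erefl) E; rewrite E ltnn in ij.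
    have := F1 L _ _ ji jw iw; rewrite !index_uniq ?szpi //.
    move=> /(_ ltac:(move: rj; lia) ltac:(move: ri; lia)).
    by rewrite ltnNge (ltnW ij).
  + by apply: perm_trans (perm_filter _ mupi) _; rewrite perm_sym; exact: perm_filter.
Qed.

Theorem theorem3 (s t : nat) (w : seq nat) :
  2 <= s -> 2 <= t ->
  sorted ltn w -> all (fun x => s + 1 <= x <= s * t) w ->
  [/\ (forall I, Omega s t w I -> Lambda s t w (mu s t w I)),
      (forall I1 I2, Omega s t w I1 -> Omega s t w I2 ->
         mu s t w I1 = mu s t w I2 -> I1 = I2) &
      (t = 2 -> forall pi, Lambda s t w pi ->
         exists I, Omega s t w I /\ mu s t w I = pi)].
Proof.
move=> s2 t2 sw wr; split.
- by move=> I Om; apply: mu_Lambda t2 _; split.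
- by move=> I1 I2 O1 O2 e; apply: (mu_inj (s := s) (t := t) (w := w)) e; split.
- by move=> te pi L; exact: surj s2 te sw wr L.
Qed.
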